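(* Let $M\in\mathbb R^{n\times n}$ be sufficient, $Q\in\mathbb R^{n\times d}$, $q\in\mathbb R^n$, $S=\{Q\theta+q:\theta\in\mathbb R^d\}$, and $S^\epsilon=S+\boldsymbol\epsilon$. There exists $\delta>0$ such that $S^\epsilon$ lies in general position for every $\epsilon\in(0,\delta)$.
   Context: $\boldsymbol\epsilon=(\epsilon,\epsilon^2,\dots,\epsilon^n)^T$. Let $A=[\,I\;\;-M\,]\in\mathbb R^{n\times 2n}$, columns indexed by $\{1,\dots,2n\}$; $A_{\cdot J}$ is the submatrix of columns indexed by $J$. Complementary index: $\bar i=i+n$ if $i\le n$, $\bar i=i-n$ if $i>n$. A set $J$ is complementary if $i\in J\Rightarrow\bar i\notin J$. A complementary basis is a complementary set $B$ with $|B|=n$ and $A_{\cdot B}$ invertible. Complementary cone: $\mathcal C(J)=\{A_{\cdot J}\lambda:\lambda\ge0\}$. An affine subspace $T$ lies in general position if for every complementary basis $B$: $T\cap\mathcal C(B)\neq\emptyset$ implies $T\cap\operatorname{int}\mathcal C(B)\neq\emptyset$. $M$ is column sufficient if $[z_i(Mz)_i\le 0\ \forall i]\Rightarrow[z_i(Mz)_i=0\ \forall i]$; row sufficient if $M^T$ is column sufficient; sufficient if both. *)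

(* Defs.v *)
From HB Require Import structures.
From mathcomp Require Import all_boot all_order all_algebra.
Set Implicit Arguments. Unset Strict Implicit. Unset Printing Implicit Defensive.
Import Order.TTheory GRing.Theory Num.Theory.
Local Open Scope ring_scope.

Section Defs.
Variables (R : realFieldType) (n : nat).

Definition epsv (e : R) : 'cV[R]_n := \col_(i < n) e ^+ i.+1.

Definition Amat (M : 'M[R]_n) : 'M[R]_(n, n + n) := row_mx 1%:M (- M).

Definition compl_idx (i : 'I_(n + n)) : 'I_(n + n) :=
  match split i with
  | inl j => rshift n j
  | inr j => lshift n j
  end.

(* A set of column indices is given as an (ordered) injective list
   b : 'I_m -> 'I_(n+n); its column submatrix is colsub b A. *)
Definition complementary m (b : 'I_m -> 'I_(n + n)) : Prop :=
  forall k l, b l <> compl_idx (b k).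

Definition compl_basis (M : 'M[R]_n) (b : 'I_n -> 'I_(n + n)) : Prop :=
  injective b /\ complementary b /\ colsub b (Amat M) \in unitmx.

Definition ccone (M : 'M[R]_n) m (b : 'I_m -> 'I_(n + n)) (x : 'cV[R]_n) : Prop :=
  exists lam : 'cV[R]_m, (forall i, 0 <= lam i 0) /\ x = colsub b (Amat M) *m lam.

Definition interior (P : 'cV[R]_n -> Prop) (x : 'cV[R]_n) : Prop :=
  exists2 r : R, 0 < r &
    forall y : 'cV[R]_n, (forall i, `|y i 0 - x i 0| < r) -> P y.

Definition general_position (M : 'M[R]_n) (T : 'cV[R]_n -> Prop) : Prop :=
  forall b : 'I_n -> 'I_(n + n), compl_basis M b ->
    (exists x, T x /\ ccone M b x) ->
    (exists x, T x /\ interior (ccone M b) x).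

Definition column_sufficient (M : 'M[R]_n) : Prop :=
  forall z : 'cV[R]_n, (forall i, z i 0 * (M *m z) i 0 <= 0) ->
    forall i, z i 0 * (M *m z) i 0 = 0.

Definition row_sufficient (M : 'M[R]_n) : Prop := column_sufficient M^T.

Definition sufficient (M : 'M[R]_n) : Prop :=
  column_sufficient M /\ row_sufficient M.

End Defs.

(* Main.v *)
Require Import Defs.
From HB Require Import structures.
From mathcomp Require Import all_boot all_order all_algebra.
From Stdlib Require Import FunctionalExtensionality.
Set Implicit Arguments. Unset Strict Implicit. Unset Printing Implicit Defensive.
Import Order.TTheory GRing.Theory Num.Theory.
Local Open Scope ring_scope.

Section K.
Variable R : realFieldType.

Lemma small_pos (a b : R) : 0 < a ->
  exists2 dl : R, 0 < dl & forall t, 0 < t -> t < dl -> 0 < a + t * b.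
Proof.
move=> a0.
have bp : 0 < `|b| + 1 by apply: ltr_wpDl (normr_ge0 b) ltr01.
exists (a / (`|b| + 1)); first by rewrite divr_gt0.
move=> t t0 td.
have ht : t * (`|b| + 1) < a by rewrite -ltr_pdivlMr.
have h1 : t * `|b| <= t * (`|b| + 1).
  by apply: ler_wpM2l; [exact: ltW | rewrite lerDl].
have h2 : - (t * `|b|) <= t * b.
  by rewrite -mulrN; apply: ler_wpM2l; [exact: ltW | rewrite lerNl -normrN ler_norm].
have h3 : 0 < a - t * `|b| by rewrite subr_gt0; apply: le_lt_trans h1 ht.
apply: lt_le_trans h3 _; by rewrite lerD2l.
Qed.

Lemma common_small (T : eqType) (P : T -> R -> Prop) (s : seq T) :
  (forall i, i \in s -> exists2 dl : R, 0 < dl & forall t, 0 < t -> t < dl -> P i t) ->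
  exists2 dl : R, 0 < dl & forall t, 0 < t -> t < dl -> forall i, i \in s -> P i t.
Proof.
elim: s => [|x s IH] H; first by exists 1 => //.
have [d1 d1p H1] := H x (mem_head _ _).
have [d2 d2p H2] : exists2 dl : R, 0 < dl & forall t, 0 < t -> t < dl -> forall i, i \in s -> P i t.
  by apply: IH => i Hi; apply: H; rewrite inE Hi orbT.
exists (Order.min d1 d2); first by rewrite lt_min d1p d2p.
move=> t t0; rewrite lt_min => /andP[t1 t2] i; rewrite inE => /orP[/eqP->|Hi].
  exact: H1.
exact: H2.
Qed.

Lemma poly_small (k : nat) (a0 : R) (a : 'I_k -> R) :
  (a0 != 0 \/ exists j, a j != 0) ->
  exists2 dl : R, 0 < dl & forall x, 0 < x -> x < dl ->
    a0 + \sum_(j < k) a j * x ^+ j.+1 != 0.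
Proof.
elim: k a0 a => [|k IH] a0 a.
  case=> [H|[[j]]] //; exists 1 => // x _ _; by rewrite big_ord0 addr0.
case: (eqVneq a0 0) => [->|a0n] H.
  have H' : (a ord0 != 0 \/ exists j, a (lift ord0 j) != 0).
    case: H => [/eqP//|[j]].
    by case: (unliftP ord0 j) => [j' ->|->]; [right; exists j'|left].
  have [dl dlp Hd] := IH _ _ H'.
  exists dl => // x x0 xd; rewrite add0r big_ord_recl.
  have -> : \sum_(i < k) a (lift ord0 i) * x ^+ (lift ord0 i).+1 =
            x * \sum_(i < k) a (lift ord0 i) * x ^+ i.+1.
    rewrite mulr_sumr; apply: eq_bigr => i _.
    by rewrite /= exprS mulrCA.
  rewrite expr1 mulrC -mulrDr; apply: mulf_neq0; [by rewrite gt_eqF | exact: Hd].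
set C := \sum_(j < k.+1) `|a j|.
exists (Order.min 1 (`|a0| / (C + 1))).
  have Cp : 0 < C + 1 by apply: ltr_wpDl ltr01; rewrite sumr_ge0.
  by rewrite lt_min ltr01 /= divr_gt0 ?normr_gt0.
move=> x x0; rewrite lt_min => /andP[x1].
have Cp : 0 < C + 1 by apply: ltr_wpDl ltr01; rewrite sumr_ge0.
rewrite ltr_pdivlMr // => hx.
have hb : `|\sum_(j < k.+1) a j * x ^+ j.+1| <= x * C.
  apply: le_trans (ler_norm_sum _ _ _) _.
  rewrite /C mulr_sumr; apply: ler_sum => j _.
  rewrite normrM normrX (ger0_norm (ltW x0)) mulrC; apply: (ler_wpM2r (normr_ge0 (a j))).
  rewrite exprS; apply: ler_piMr (ltW x0) _; exact: exprn_ile1 (ltW x0) (ltW x1).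
have hC : x * C < `|a0|.
  apply: le_lt_trans _ hx; apply: ler_wpM2l; [exact: ltW | by rewrite lerDl ler01].
apply/negP => /eqP h.
have : `|a0| <= x * C.
  apply: le_trans hb; have -> : \sum_(j < k.+1) a j * x ^+ j.+1 = - a0.
    by apply/eqP; rewrite -addr_eq0 addrC h.
  by rewrite normrN.
by rewrite leNgt hC.
Qed.


Lemma alg1 (a k0 Z X c Y : R) : - (k0 + Z) * a + X + c + Y = X + (c - a * k0) + (Y - a * Z).
Proof.
rewrite mulNr mulrDl opprD (mulrC k0) (mulrC Z).
rewrite [X + (c - _)]addrA -[RHS]addrA [Y - _]addrC [RHS]addrA.
rewrite -[- (a * k0) + _ + X]addrA [- (a * Z) + X]addrC.
rewrite -!addrA [LHS]addrCA; congr (_ + _); rewrite [RHS]addrCA; congr (_ + _).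
by rewrite addrCA.
Qed.

Definition vrow d N (p : 'rV[R]_d) (c : R) (g : 'rV[R]_N) (th : 'cV[R]_d) (e : R) : R :=
  (p *m th) 0 0 + c + (g *m epsv N e) 0 0.

Lemma vrow_trans d N p c g (th w : 'cV[R]_d) t e :
  @vrow d N p c g (th + t *: w) e = vrow p c g th e + t * (p *m w) 0 0.
Proof.
rewrite /vrow mulmxDr -scalemxAr !mxE -!addrA; congr (_ + _).
by rewrite addrC -addrA.
Qed.

Lemma sub3 (x y c k : R) : (x + c + k) - (y + c + k) = x - y.
Proof. by rewrite -[x + c + k]addrA -[y + c + k]addrA [y + _]addrC addrKA. Qed.

Lemma vrow_diff d N p c g (a b : 'cV[R]_d) e :
  (p *m (a - b)) 0 0 = @vrow d N p c g a e - vrow p c g b e.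
Proof. by rewrite /vrow sub3 mulmxBr !mxE. Qed.

Lemma gsum N (g : 'rV[R]_N) e : (g *m epsv N e) 0 0 = \sum_j g 0 j * e ^+ j.+1.
Proof. by rewrite mxE; apply: eq_bigr => j _; rewrite /epsv mxE. Qed.


Definition feas m d N (P : 'I_m -> 'rV[R]_d) (c : 'I_m -> R) (G : 'I_m -> 'rV[R]_N) e :=
  exists th, forall i, 0 <= vrow (P i) (c i) (G i) th e.
Definition sfeas m d N (P : 'I_m -> 'rV[R]_d) (c : 'I_m -> R) (G : 'I_m -> 'rV[R]_N) e :=
  exists th, forall i, 0 < vrow (P i) (c i) (G i) th e.

Lemma key m d N : forall (P : 'I_m -> 'rV[R]_d) (c : 'I_m -> R) (G : 'I_m -> 'rV[R]_N),
  (forall y : 'I_m -> R, \sum_i y i *: G i = 0 -> forall i, y i = 0) ->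
  exists2 dl : R, 0 < dl & forall e, 0 < e -> e < dl ->
    feas P c G e -> sfeas P c G e.
Proof.
elim: m => [|m IH] P c G Hind.
  by exists 1 => // e _ _ [th _]; exists th; case.
set p := P ord0; set k0 := c ord0; set g := G ord0.
pose P1 := fun i => P (lift ord0 i); pose c1 := fun i => c (lift ord0 i).
pose G1 := fun i => G (lift ord0 i).
have Hind1 : forall y : 'I_m -> R, \sum_i y i *: G1 i = 0 -> forall i, y i = 0.
  move=> y hy i.
  pose y' := fun j : 'I_m.+1 => if unlift ord0 j is Some j' then y j' else 0.
  have := Hind y' _ (lift ord0 i); rewrite /y' liftK; apply.
  rewrite big_ord_recl /y' unlift_none scale0r add0r -[X in _ = X]hy; apply: eq_bigr => j _.
  by rewrite liftK.
have [d1 d1p H1] := IH P1 c1 G1 Hind1.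
have split_all : forall th e, 0 < vrow p k0 g th e ->
    (forall i, 0 < vrow (P1 i) (c1 i) (G1 i) th e) -> sfeas P c G e.
  move=> th e h0 h1; exists th => i.
  by case: (unliftP ord0 i) => [j ->|->]; [exact: h1 | exact: h0].
case: (eqVneq p 0) => [p0|pn0].
  have [j gj] : exists j, g 0 j != 0.
    case: (pickP (fun j => g 0 j != 0)) => [j hj|hn]; first by exists j.
    have g0 : g = 0.
      apply/matrixP => i j; rewrite (ord1 i) mxE; by have := hn j => /negbFE/eqP.
    pose y := fun j : 'I_m.+1 => if j == ord0 then 1 else (0 : R).
    have := Hind y _ ord0; rewrite /y eqxx => h; exfalso; have := oner_neq0 R.
    rewrite h // ?eqxx // big_ord_recl /= -/g g0 scaler0 add0r big1 // => i _.
    by rewrite scale0r.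
  have [dp dpp Hp] := poly_small (a0 := k0) (a := fun j => g 0 j) (or_intror (ex_intro _ j gj)).
  exists (Order.min dp d1); first by rewrite lt_min dpp d1p.
  move=> e e0; rewrite lt_min => /andP[edp ed1] [th0 hth0].
  have [th1 hth1] := H1 e e0 ed1 (ex_intro _ th0 (fun i => hth0 (lift ord0 i))).
  apply: (split_all th1) => //.
  have row0 : forall th, vrow p k0 g th e = k0 + \sum_j g 0 j * e ^+ j.+1.
    by move=> th; rewrite /vrow p0 mul0mx mxE add0r gsum.
  have := hth0 ord0; rewrite -/p -/k0 -/g !row0 le0r => /orP[/eqP h|//].
  by move: (Hp e e0 edp); rewrite h eqxx.
pose s := (p *m p^T) 0 0.
have sp : 0 < s.
  have sge : 0 <= s by rewrite /s mxE sumr_ge0 // => j _; rewrite mxE -expr2 sqr_ge0.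
  rewrite lt_neqAle sge andbT eq_sym; apply/eqP => s0.
  move/eqP: pn0; apply; apply/matrixP => i j; rewrite (ord1 i) [RHS]mxE.
  have nn : forall k : 'I_d, true -> 0 <= p 0 k * p^T k 0.
    by move=> k _; rewrite mxE -expr2 sqr_ge0.
  move: s0; rewrite /s mxE => s0; have h := psumr_eq0P nn s0.
  by have := h j isT; rewrite mxE => /eqP; rewrite -expr2 sqrf_eq0 => /eqP ->.
pose u := s^-1 *: p^T.
have pu : p *m u = 1%:M.
  by rewrite /u -scalemxAr [p *m _]mx11_scalar -/s scale_scalar_mx mulVf ?gt_eqF.
pose Nm := 1%:M - u *m p.
have pN : p *m Nm = 0.
  by rewrite /Nm mulmxBr mulmx1 mulmxA pu mul1mx subrr.
pose al := fun i => (P1 i *m u) 0 0.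
pose P2 := fun i => P1 i *m Nm.
pose c2 := fun i => c1 i - al i * k0.
pose G2 := fun i => G1 i - al i *: g.
have Hind2 : forall y : 'I_m -> R, \sum_i y i *: G2 i = 0 -> forall i, y i = 0.
  move=> y hy i.
  pose y' := fun j : 'I_m.+1 => if unlift ord0 j is Some j' then y j' else - \sum_i y i * al i.
  have := Hind y' _ (lift ord0 i); rewrite /y' liftK; apply.
  rewrite big_ord_recl /y' unlift_none -[X in _ = X]hy.
  under [in RHS]eq_bigr => j _ do rewrite /G2 scalerBr scalerA.
  rewrite sumrB -scaler_suml scaleNr addrC; congr (_ - _).
  by apply: eq_bigr => j _; rewrite liftK.
have [d2 d2p H2] := IH P2 c2 G2 Hind2.
exists (Order.min d1 d2); first by rewrite lt_min d1p d2p.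
move=> e e0; rewrite lt_min => /andP[ed1 ed2] [th0 hth0].
pose K := k0 + (g *m epsv N e) 0 0.
have transl0 : forall ph, vrow p k0 g (- K *: u + Nm *m ph) e = 0.
  move=> ph; rewrite /vrow mulmxDr mulmxA pN mul0mx addr0 -scalemxAr pu.
  by rewrite /K !mxE eqxx mulr1 -addrA addNr.
have transl : forall ph i, vrow (P1 i) (c1 i) (G1 i) (- K *: u + Nm *m ph) e
     = vrow (P2 i) (c2 i) (G2 i) ph e.
  move=> ph i; rewrite /vrow /P2 /c2 /G2 mulmxDr -scalemxAr mulmxA mulmxBl.
  set U := P1 i *m u; set X := P1 i *m Nm *m ph; set Y := G1 i *m epsv N e.
  rewrite -scalemxAl; set Z := g *m epsv N e.
  rewrite !mxE /K /Z /al !mxE.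
  exact: alg1.
have fixp : forall th, vrow p k0 g th e = 0 -> - K *: u + Nm *m th = th.
  move=> th h.
  have hp : (p *m th) 0 0 = - K.
    by apply/eqP; rewrite -addr_eq0 /K addrA; apply/eqP.
  rewrite /Nm mulmxBl mul1mx -mulmxA [p *m th]mx11_scalar hp mul_mx_scalar.
  by rewrite addrC subrK.
have half : forall x : R, 0 < x -> 0 < x / 2 /\ x / 2 < x.
  move=> x x0; split; first by rewrite divr_gt0.
  by rewrite ltr_pdivrMr // ltr_pMr // ltr1n.
have r0ge : 0 <= vrow p k0 g th0 e by exact: hth0 ord0.
have [th1 hth1] := H1 e e0 ed1 (ex_intro _ th0 (fun i => hth0 (lift ord0 i))).
move: r0ge; rewrite le0r => /orP[/eqP r0|r0].
  have f2 : feas P2 c2 G2 e.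
    by exists th0 => i; rewrite -transl fixp //; exact: hth0 (lift ord0 i).
  have [ph1 hph1] := H2 e e0 ed2 f2.
  set th2 := - K *: u + Nm *m ph1.
  have hrows : forall i, 0 < vrow (P1 i) (c1 i) (G1 i) th2 e.
    by move=> i; rewrite /th2 transl.
  have HH : forall i, i \in enum 'I_m -> exists2 dl : R, 0 < dl &
      forall t, 0 < t -> t < dl -> 0 < vrow (P1 i) (c1 i) (G1 i) (th2 + t *: u) e.
    move=> i _; have [dl dlp H] := small_pos (al i) (hrows i).
    by exists dl => // t t0 td; rewrite vrow_trans; exact: H.
  have [dl dlp Hdl] := common_small HH.
  have [t0 tdl] := half _ dlp.
  apply: (split_all (th2 + (dl / 2) *: u)).
    by rewrite vrow_trans transl0 add0r pu mxE eqxx mulr1.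
  by move=> i; apply: Hdl => //; rewrite mem_enum.
have [dl dlp Hdl] := small_pos (vrow p k0 g th1 e - vrow p k0 g th0 e) r0.
have mp : 0 < Order.min dl 1 by rewrite lt_min dlp ltr01.
have [t0 tm] := half _ mp.
move: tm; rewrite lt_min => /andP[tdl t1].
apply: (split_all (th0 + (Order.min dl 1 / 2) *: (th1 - th0))).
  by rewrite vrow_trans (@vrow_diff _ _ p k0 g _ _ e); apply: Hdl.
move=> i; rewrite vrow_trans (@vrow_diff _ _ (P1 i) (c1 i) (G1 i) _ _ e) mulrBr addrCA.
apply: ltr_pwDl; first by apply: mulr_gt0.
rewrite -{1}(mul1r (vrow (P1 i) (c1 i) (G1 i) th0 e)) -mulrBl mulr_ge0 //.
  by rewrite subr_ge0 ltW.
exact: hth0 (lift ord0 i).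
Qed.


Lemma addE m n (A B : 'M[R]_(m,n)) i j : (A + B) i j = A i j + B i j.
Proof. by rewrite mxE. Qed.
Lemma subE m n (A B : 'M[R]_(m,n)) i j : (A - B) i j = A i j - B i j.
Proof. by rewrite !mxE. Qed.
Lemma rowE m n (A : 'M[R]_(m,n)) i j : (row i A) 0 j = A i j.
Proof. by rewrite mxE. Qed.

Lemma perb n d (M : 'M[R]_n) (Q : 'M[R]_(n, d)) (q : 'cV[R]_n) (b : 'I_n -> 'I_(n + n)) :
  exists2 dl : R, 0 < dl & forall e, 0 < e -> e < dl ->
   compl_basis M b ->
   (exists x, (exists theta, x = Q *m theta + q + epsv n e) /\ ccone M b x) ->
   exists x, (exists theta, x = Q *m theta + q + epsv n e) /\ interior (ccone M b) x.
Proof.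
set AB := colsub b (Amat M).
case: (boolP (AB \in unitmx)) => [Hu|Hnu]; last first.
  by exists 1 => // e _ _ [_ [_ Hu]]; rewrite -/AB (negbTE Hnu) in Hu.
set H := invmx AB.
pose P := fun i : 'I_n => row i (H *m Q).
pose c := fun i : 'I_n => (H *m q) i 0.
pose G := fun i : 'I_n => row i H.
have Hind : forall y : 'I_n -> R, \sum_i y i *: G i = 0 -> forall i, y i = 0.
  move=> y hy i.
  pose yr := \row_j y j.
  have h1 : yr *m H = 0.
    rewrite mulmx_sum_row -[RHS]hy; apply: eq_bigr => j _; by rewrite mxE.
  have h2 : yr = 0 by rewrite -[yr]mulmx1 -(mulVmx Hu) mulmxA -/H h1 mul0mx.
  by have := congr1 (fun A : 'rV_n => A 0 i) h2; rewrite !mxE.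
have vH : forall th e, forall i, vrow (P i) (c i) (G i) th e = (H *m (Q *m th + q + epsv n e)) i 0.
  move=> th e i; rewrite /vrow /P /G !mulmxDr -!row_mul !rowE !addE.
  by rewrite mulmxA.
have [dl dlp Hdl] := @key n d n P c G Hind.
exists dl => // e e0 ed _ [x [[th hx] [lam [lam0 xl]]]].
have [th' hth'] : sfeas P c G e.
  apply: Hdl => //; exists th => i; rewrite vH -hx xl -/AB mulKmx //.
set x' := Q *m th' + q + epsv n e.
exists x'; split; first by exists th'.
have hpos : forall i, 0 < (H *m x') i 0 by move=> i; rewrite -vH.
pose S := fun i => \sum_j `|H i j|.
have HH : forall i, i \in enum 'I_n -> exists2 r : R, 0 < r & forall t, 0 < t -> t < r ->
   forall y : 'cV_n, (forall j, `|y j 0 - x' j 0| < t) -> 0 <= (H *m y) i 0.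
  move=> i _; have [r rp Hr] := small_pos (- S i) (hpos i).
  exists r => // t t0 tr y hy.
  have eqy : H *m y = H *m x' + H *m (y - x') by rewrite mulmxBr addrC subrK.
  have bnd : `|(H *m (y - x')) i 0| <= S i * t.
    rewrite mxE /S mulr_suml; apply: le_trans (ler_norm_sum _ _ _) _.
    apply: ler_sum => j _; rewrite normrM; apply: ler_wpM2l => //.
    by rewrite subE ltW.
  rewrite eqy addE; apply: le_trans (ltW (Hr t t0 tr)) _.
  rewrite mulrN mulrC lerD2l lerNl; apply: le_trans bnd.
  by rewrite -normrN ler_norm.
have [r rp Hr] := common_small HH.
exists (r / 2); first by rewrite divr_gt0.
move=> y hy; exists (H *m y); split.
  by move=> i; apply: (Hr (r / 2)) => //; [rewrite divr_gt0 // | rewrite ltr_pdivrMr // ltr_pMr // ltr1n | rewrite mem_enum].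
by rewrite -/AB mulKVmx.
Qed.

End K.

Theorem mainTheorem10 (R : realFieldType) (n d : nat)
    (M : 'M[R]_n) (Q : 'M[R]_(n, d)) (q : 'cV[R]_n) :
  sufficient M ->
  exists2 delta : R, 0 < delta &
    forall e : R, 0 < e -> e < delta ->
      general_position M
        (fun x : 'cV[R]_n => exists theta : 'cV[R]_d, x = Q *m theta + q + epsv n e).
Proof.
move=> _.
have HH : forall f : {ffun 'I_n -> 'I_(n + n)}, f \in enum {ffun 'I_n -> 'I_(n + n)} ->
  exists2 dl : R, 0 < dl & forall e, 0 < e -> e < dl ->
   compl_basis M f ->
   (exists x, (exists theta, x = Q *m theta + q + epsv n e) /\ ccone M f x) ->
   exists x, (exists theta, x = Q *m theta + q + epsv n e) /\ interior (ccone M f) x.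
  move=> f _; exact: perb.
have [dl dlp Hdl] := common_small HH.
exists dl => // e e0 ed b.
have -> : b = [ffun j => b j] :> ('I_n -> 'I_(n + n)).
  by apply: functional_extensionality => j; rewrite ffunE.
by apply: Hdl => //; rewrite mem_enum.
Qed.
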